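(* There exists a function $f:\mathbb{N}\to\{-1,1\}$ with $f(1)=1$, $f(2)=1$, $f(3)=-1$, $f(5)=-1$, satisfying $f(2n)=f(2)f(n)$ and $f(3n)=f(3)f(n)$ for all $n\in\mathbb{N}$, such that for every integer $n\ge 0$ $$f(6n+1)+f(6n+2)+f(6n+3)=-\big(f(6n+4)+f(6n+5)+f(6n+6)\big)\in\{-1,1\}.$$ In particular $\sum_{n\le 6m} f(n)=0$ for every integer $m\ge 0$, and hence $\sum_{n\le x} f(n)=O(1)$.
   Context: Here $\mathbb{N}=\{1,2,3,\dots\}$. *)

(* Defs.v *)
(* f : nat -> int, only values at n >= 1 are constrained. *)
From mathcomp Require Import all_boot all_order all_algebra.

(* Main.v *)
Require Import Defs.
From mathcomp Require Import all_boot all_order all_algebra.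
From mathcomp Require Import zify.
Import Order.TTheory GRing.Theory Num.Theory.

Definition Xr (g : nat -> bool) (m : nat) : bool :=
  if g (3 * m+1)%N != g (2 * m+1)%N then g (2 * m+1)%N
  else if g (3 * m+2)%N != g (m+1)%N then g (m+1)%N else true.

Definition Yr (g : nat -> bool) (m : nat) : bool :=
  if g (3 * m+1)%N != g (2 * m+1)%N then
    (if g (3 * m+2)%N != g (m+1)%N then g (3 * m+1)%N else g (2 * m+1)%N)
  else if g (3 * m+2)%N != g (m+1)%N then g (m+1)%N else false.

Definition step (g : nat -> bool) (n : nat) : bool :=
  if (n <= 1)%N then true
  else if n == 5%N then false
  else if n %% 2 == 0%N then g (n %/ 2)
  else if n %% 3 == 0%N then ~~ g (n %/ 3)
  else if n %% 6 == 1%N then Xr g (n %/ 6) else Yr g (n %/ 6).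

Fixpoint gf (fuel n : nat) : bool :=
  match fuel with 0 => true | S k => step (gf k) n end.

Definition g (n : nat) := gf n.+1 n.

Lemma step_ext g1 g2 n : (forall k, (k < n)%N -> g1 k = g2 k) -> step g1 n = step g2 n.
Proof.
move=> H; rewrite /step.
case: ifP => // n1; case: ifP => // n5.
case: ifP => [_|h2]; first by rewrite H //; lia.
case: ifP => [_|h3]; first by rewrite H //; lia.
rewrite /Xr /Yr.
case: ifP => h6.
  rewrite !H //; lia.
rewrite !H //; lia.
Qed.

Lemma gf_stable f1 f2 n : (n < f1)%N -> (n < f2)%N -> gf f1 n = gf f2 n.
Proof.
elim: f1 f2 n => [|a IH] [|b] n //= h1 h2.
apply: step_ext => k hk; apply: IH; lia.
Qed.

Lemma g_unfold n : g n = step g n.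
Proof.
rewrite {1}/g /=; apply: step_ext => k hk; rewrite /g; apply: gf_stable; lia.
Qed.

Lemma g2 n : (0 < n)%N -> g (2 * n) = g n.
Proof.
move=> hn; rewrite g_unfold /step.
have -> : (2 * n <= 1)%N = false by lia.
have -> : (2 * n == 5)%N = false by lia.
have -> : (2 * n) %% 2 = 0%N by lia.
have -> : (2 * n) %/ 2 = n by lia.
by [].
Qed.

Lemma g3 n : (0 < n)%N -> g (3 * n) = ~~ g n.
Proof.
elim/ltn_ind: n => n IH hn.
case: (boolP (odd n)) => ho.
  rewrite g_unfold /step.
  have -> : (3 * n <= 1)%N = false by lia.
  have -> : (3 * n == 5)%N = false by lia.
  have -> : ((3 * n) %% 2 == 0)%N = false.
    have : n %% 2 = 1%N by rewrite modn2 ho.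
    lia.
  have -> : (3 * n) %% 3 = 0%N by lia.
  have -> : (3 * n) %/ 3 = n by lia.
  by [].
have [k hk] : exists k, n = (2 * k)%N.
  exists n./2; rewrite -[n in LHS](odd_double_half n) (negbTE ho) add0n -muln2 mulnC //.
subst n.
have -> : (3 * (2 * k) = 2 * (3 * k))%N by lia.
rewrite g2; last lia.
rewrite IH; try lia.
by rewrite g2 //; lia.
Qed.

Lemma g61 m : (0 < m)%N -> g (6 * m + 1) = Xr g m.
Proof.
move=> hm; rewrite g_unfold /step.
have -> : (6 * m + 1 <= 1)%N = false by lia.
have -> : (6 * m + 1 == 5)%N = false by lia.
have -> : ((6 * m + 1) %% 2 == 0)%N = false by lia.
have -> : ((6 * m + 1) %% 3 == 0)%N = false by lia.
have -> : ((6 * m + 1) %% 6 == 1)%N = true by lia.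
have -> : (6 * m + 1) %/ 6 = m by lia.
by [].
Qed.

Lemma g65 m : (0 < m)%N -> g (6 * m + 5) = Yr g m.
Proof.
move=> hm; rewrite g_unfold /step.
have -> : (6 * m + 5 <= 1)%N = false by lia.
have -> : (6 * m + 5 == 5)%N = false by lia.
have -> : ((6 * m + 5) %% 2 == 0)%N = false by lia.
have -> : ((6 * m + 5) %% 3 == 0)%N = false by lia.
have -> : ((6 * m + 5) %% 6 == 1)%N = false by lia.
have -> : (6 * m + 5) %/ 6 = m by lia.
by [].
Qed.

Definition bad (m : nat) : bool :=
  [&& g (m+1) == g (2 * m+1), g (3 * m+1) != g (m+1) & g (3 * m+2) != g (m+1)].

Lemma g1 : g 1 = true. Proof. by []. Qed.
Lemma g5 : g 5 = false. Proof. by []. Qed.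
Lemma g2' : g 2 = true. Proof. by rewrite (g2 1). Qed.
Lemma g3' : g 3 = false. Proof. by rewrite (g3 1). Qed.
Lemma g4' : g 4 = true. Proof. by rewrite (g2 2) // g2'. Qed.

Lemma notbad m : ~~ bad m.
Proof.
elim/ltn_ind: m => m IH.
have [k [hk|hk]] : exists k, m = (2 * k)%N \/ m = (2 * k + 1)%N.
  exists m./2; have := odd_double_half m; rewrite -muln2; case: (odd m) => /=; lia.
- subst m; case: k IH => [|k] IH; first by vm_compute.
  rewrite /bad.
  have -> : (3 * (2 * k.+1) + 1 = 6 * k.+1 + 1)%N by lia.
  have -> : (3 * (2 * k.+1) + 2 = 2 * (3 * k.+1 + 1))%N by lia.
  rewrite g61 // g2 // /Xr.
  case: (g (3 * k.+1 + 1)); case: (g (2 * k.+1 + 1)) => //=;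
  case: (g (2 * (2 * k.+1) + 1)) => //; case: (g (3 * k.+1 + 2)) => //;
  case: (g (k.+1 + 1)) => //.
- subst m; case: k IH => [|k] IH; first by vm_compute.
  have nb := IH k.+1 ltac:(lia).
  move: nb; rewrite /bad.
  have -> : (2 * k.+1 + 1 + 1 = 2 * (k.+1 + 1))%N by lia.
  have -> : (3 * (2 * k.+1 + 1) + 1 = 2 * (3 * k.+1 + 2))%N by lia.
  have -> : (3 * (2 * k.+1 + 1) + 2 = 6 * k.+1 + 5)%N by lia.
  rewrite g65 // !g2 // /Yr.
  case: (g (3 * k.+1 + 1)); case: (g (2 * k.+1 + 1)) => //=;
  case: (g (2 * (2 * k.+1 + 1) + 1)) => //; case: (g (3 * k.+1 + 2)) => //;
  case: (g (k.+1 + 1)) => //.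
Qed.
Local Open Scope ring_scope.

Definition Fb (b : bool) : int := if b then 1 else -1.
Definition ff (n : nat) : int := Fb (g n).

Lemma ff_pm n : ff n = 1 \/ ff n = -1.
Proof. rewrite /ff /Fb; case: (g n); [left|right]; by []. Qed.

Lemma block n :
  ff (6 * n + 1)%N + ff (6 * n + 2)%N + ff (6 * n + 3)%N
    = - (ff (6 * n + 4)%N + ff (6 * n + 5)%N + ff (6 * n + 6)%N) /\
  (ff (6 * n + 1)%N + ff (6 * n + 2)%N + ff (6 * n + 3)%N = 1 \/
   ff (6 * n + 1)%N + ff (6 * n + 2)%N + ff (6 * n + 3)%N = -1).
Proof.
case: n => [|n]; first by vm_compute; intuition.
have nb := notbad n.+1; move: nb; rewrite /bad /ff.
have -> : (6 * n.+1 + 2 = 2 * (3 * n.+1 + 1))%N by lia.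
have -> : (6 * n.+1 + 3 = 3 * (2 * n.+1 + 1))%N by lia.
have -> : (6 * n.+1 + 4 = 2 * (3 * n.+1 + 2))%N by lia.
have -> : (6 * n.+1 + 6 = 2 * (3 * (n.+1 + 1)))%N by lia.
rewrite g61 // g65 // !g2 // !g3 // /Xr /Yr.
case: (g (3 * n.+1 + 1)); case: (g (2 * n.+1 + 1));
case: (g (3 * n.+1 + 2)); case: (g (n.+1 + 1)) => //= _; vm_compute; intuition.
Qed.

Definition S (m : nat) : int := \sum_(1 <= k < m.+1) ff k.

Lemma Ssucc n : S n.+1 = S n + ff n.+1.
Proof. by rewrite /S big_nat_recr. Qed.

Lemma S6 m : S (6 * m) = 0.
Proof.
elim: m => [|m IH]; first by rewrite /S big_geq.
have E : forall j, S (6 * m + j.+1) = S (6 * m + j) + ff (6 * m + j.+1)%N.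
  by move=> j; rewrite addnS Ssucc.
have -> : (6 * m.+1 = 6 * m + 6)%N by lia.
rewrite !E addn0 IH.
have [h _] := block m.
lia.
Qed.

Theorem mainTheorem2 :
  exists f : nat -> int,
    (forall n : nat, (0 < n)%N -> f n = 1 \/ f n = -1) /\
    f 1%N = 1 /\ f 2%N = 1 /\ f 3%N = -1 /\ f 5%N = -1 /\
    (forall n : nat, (0 < n)%N -> f (2 * n)%N = f 2%N * f n) /\
    (forall n : nat, (0 < n)%N -> f (3 * n)%N = f 3%N * f n) /\
    (forall n : nat,
        f (6 * n + 1)%N + f (6 * n + 2)%N + f (6 * n + 3)%N
          = - (f (6 * n + 4)%N + f (6 * n + 5)%N + f (6 * n + 6)%N) /\
        (f (6 * n + 1)%N + f (6 * n + 2)%N + f (6 * n + 3)%N = 1 \/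
         f (6 * n + 1)%N + f (6 * n + 2)%N + f (6 * n + 3)%N = -1)) /\
    (forall m : nat, \sum_(1 <= k < (6 * m).+1) f k = 0) /\
    (exists C : int, forall x : nat, `|\sum_(1 <= k < x.+1) f k| <= C).
Proof.
exists ff; split; first by move=> n _; exact: ff_pm.
split; first by [].
split; first by rewrite /ff g2'.
split; first by rewrite /ff g3'.
split; first by rewrite /ff g5.
split.
  by move=> n hn; rewrite /ff g2 // g2'; rewrite mul1r.
split.
  by move=> n hn; rewrite /ff g3 // g3'; case: (g n).
split; first exact: block.
split; first exact: S6.
exists 5 => x.
have E : forall m j, S (6 * m + j.+1) = S (6 * m + j) + ff (6 * m + j.+1)%N.
  by move=> m j; rewrite addnS Ssucc.
have -> : x = (6 * (x %/ 6) + x %% 6)%N by lia.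
have : (x %% 6 < 6)%N by lia.
move: (x %/ 6)%N (x %% 6)%N => q r hr.
rewrite -/(S _) ler_norml.
have h0 := S6 q.
have h1 := ff_pm (6 * q + 1). have h2 := ff_pm (6 * q + 2).
have h3 := ff_pm (6 * q + 3). have h4 := ff_pm (6 * q + 4).
have h5 := ff_pm (6 * q + 5).
do 6! [case: r hr => [|r] hr; first by rewrite ?E addn0 h0; lia].
lia.
Qed.
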